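(* Let $X$ be a contractible finite $T_0$-space with more than one point. Then $|X|-\mathrm{rank}(X_M)=1$.
   Context: A finite $T_0$-space is identified with a finite poset via $x\le y$ iff $U_x\subseteq U_y$, where $U_x$ is the minimal open set containing $x$. For a labelling $X=\{x_1,\dots,x_n\}$, $X_M=(x_{i,j})$ is the $n\times n$ matrix with $x_{i,j}=0$ if $x_i\le x_j$ and $x_{i,j}=1$ otherwise. *)

(* Defs.v *)
From HB Require Import structures.
From mathcomp Require Import all_boot all_order all_algebra.
From mathcomp Require Import all_classical all_reals all_analysis.
Set Implicit Arguments. Unset Strict Implicit. Unset Printing Implicit Defensive.
Import Order.TTheory GRing.Theory Num.Theory.
Import numFieldNormedType.Exports.
Local Open Scope classical_set_scope.
Local Open Scope ring_scope.

(* U_x : the minimal open set containing x (intersection of all open sets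
   containing x; open when X is finite). *)
Definition minimal_open (X : topologicalType) (x : X) : set X :=
  \bigcap_(U in [set U : set X | open U /\ U x]) U.

Definition fin_le (X : topologicalType) (x y : X) : Prop :=
  minimal_open x `<=` minimal_open y.

Definition XM (R : fieldType) (X : topologicalType) (n : nat)
  (lab : 'I_n -> X) : 'M[R]_n :=
  \matrix_(i < n, j < n) (if `[< fin_le (lab i) (lab j) >] then 0 else 1).

Definition contractible (R : realType) (X : topologicalType) : Prop :=
  exists (x0 : X) (H : X * R -> X),
    {within [set p : X * R | 0 <= p.2 <= 1], continuous H} /\
    (forall x, H (x, 0) = x) /\ (forall x, H (x, 1) = x0).

(* Main.v *)
Require Import Defs.
From HB Require Import structures.
From mathcomp Require Import all_boot all_order all_algebra.
From Stdlib Require Classical_Prop.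
From mathcomp Require Import zify.
Import Order.TTheory GRing.Theory Num.Theory.
Local Open Scope ring_scope.
Set Implicit Arguments. Unset Strict Implicit. Unset Printing Implicit Defensive.
Section Comb.
Variable T : finType.

Definition orderb (le : rel T) :=
  [/\ reflexive le, transitive le & forall x y, le x y -> le y x -> x = y].

Definition dualr (le : rel T) : rel T := fun x y => le y x.

Lemma orderb_dual le : orderb le -> orderb (dualr le).
Proof.
case=> r t a; split; rewrite /dualr //.
- by move=> y x z h1 h2; exact: t h2 h1.
- by move=> x y h1 h2; exact: a h2 h1.
Qed.

Lemma ex_min le (S : {set T}) : orderb le -> S != set0 ->
  exists2 x, x \in S & forall y, y \in S -> le y x -> y = x.
Proof.
case=> r t a /set0Pn [x0 x0S].
case: (arg_minnP (fun x => #|[set y in S | le y x]|) x0S) => x xS xmin.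
exists x => // y yS lyx; apply: a => //.
apply/negPn/negP => nlxy.
have := xmin y yS; rewrite leqNgt => /negP; apply; apply: proper_card.
apply/properP; split.
  by apply/subsetP => z; rewrite !inE => /andP[-> h] /=; exact: t h lyx.
by exists x; rewrite !inE ?(negbTE nlxy) ?andbF ?r ?andbT; [exact: xS|].
Qed.

Variable F : fieldType.

Definition downsol (le : rel T) (S : {set T}) (p a : T -> F) :=
  forall z, z \in S -> \sum_(y in S | le y z) a y = p z.

Lemma sum_D1 (S : {set T}) x (P : pred T) (f : T -> F) :
  \sum_(y in S | P y) (if y == x then 0 else f y) =
  \sum_(y in S :\ x | P y) f y.
Proof.
rewrite big_mkcond [RHS]big_mkcond; apply: eq_bigr => y _.
rewrite !inE; case: (y =P x) => //= _; by case: (y \in S); case: (P y).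
Qed.

Lemma sol_exists le (S : {set T}) p : orderb le -> exists a, downsol le S p a.
Proof.
move=> ob; have [r t an] := ob.
move: {2}#|S| (leqnn #|S|) => k; elim: k S => [|k IH] S.
  rewrite leqn0 cards_eq0 => /eqP ->; exists (fun _ => 0) => z; by rewrite inE.
move=> Sk; have [->|S0] := eqVneq S set0.
  exists (fun _ => 0) => z; by rewrite inE.
have [x xS xmax] := ex_min (orderb_dual ob) S0.
have [|a' Ha'] := IH (S :\ x).
  by rewrite -ltnS (leq_trans _ Sk) // (cardsD1 x S) xS.
exists (fun y => if y == x then p x - \sum_(y in S :\ x | le y x) a' y else a' y).
move=> z zS; case: (z =P x) => [->|/eqP zx].
  rewrite (bigD1 x) /= ?xS ?r // eqxx.
  rewrite [X in _ + X](_ : _ = \sum_(i in S :\ x | le i x) a' i) ?subrK //.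
  rewrite big_mkcond [RHS]big_mkcond; apply: eq_bigr => i _.
  by rewrite !inE; case: (i =P x) => //= _; rewrite ?andbF ?andbT.
have zS' : z \in S :\ x by rewrite !inE zx.
rewrite -(Ha' z zS') -(sum_D1 S x (le^~ z) a').
apply: eq_bigr => y /andP[_ lyz]; case: (y =P x) => // yx.
by move: zx; rewrite -(xmax z zS) ?eqxx // -yx.
Qed.

Lemma sol_swap le (S : {set T}) p q a b :
  downsol le S p a -> downsol (dualr le) S q b ->
  \sum_(y in S) a y * q y = \sum_(y in S) p y * b y.
Proof.
move=> Ha Hb.
transitivity (\sum_(y in S) \sum_(z in S) (if le y z then a y * b z else 0)).
  apply: eq_bigr => y yS; rewrite -(Hb y yS) big_distrr /= big_mkcondr.
  by apply: eq_bigr => z _; rewrite /dualr; case: (le y z); rewrite ?mulr0.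
rewrite exchange_big /=; apply: eq_bigr => z zS.
rewrite -(Ha z zS) big_distrl /= big_mkcondr.
by apply: eq_bigr => y _; case: (le y z); rewrite ?mul0r.
Qed.


Lemma sol_zero le (S : {set T}) a : orderb le ->
  downsol le S (fun=> 0) a -> forall y, y \in S -> a y = 0.
Proof.
move=> ob Ha y yS.
have [b Hb] := sol_exists S (fun z => (z == y)%:R) (orderb_dual ob).
have E := sol_swap Ha Hb; rewrite [RHS]big1 in E; last by move=> *; rewrite mul0r.
rewrite (bigD1 y) //= eqxx mulr1 big1 ?addr0 // in E.
by move=> z /andP[_ /negbTE ->]; rewrite mulr0.
Qed.

Lemma sol_uniq le (S : {set T}) p a a' : orderb le ->
  downsol le S p a -> downsol le S p a' -> forall y, y \in S -> a y = a' y.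
Proof.
move=> ob Ha Ha' y yS; apply/eqP; rewrite -subr_eq0; apply/eqP.
apply: (@sol_zero le S (fun y => a y - a' y)) => // z zS.
by rewrite sumrB Ha // Ha' // subrr.
Qed.

Definition chi1 (le : rel T) (S : {set T}) :=
  forall a, downsol le S (fun=> 1) a -> \sum_(y in S) a y = 1.

Lemma chi1_dual le S : orderb le -> chi1 le S -> chi1 (dualr le) S.
Proof.
move=> ob h b Hb; have [a Ha] := sol_exists S (fun=> 1) ob.
have := sol_swap Ha Hb; under eq_bigr do rewrite mulr1.
by under [X in _ = X -> _]eq_bigr do rewrite mul1r; rewrite (h a Ha) => <-.
Qed.

Definition downbeat (le : rel T) (S : {set T}) x := x \in S /\ exists m,
  [/\ m \in S, m != x, le m x & forall y, y \in S -> y != x -> le y x -> le y m].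

Lemma chi1_downbeat le S x : orderb le -> downbeat le S x ->
  chi1 le (S :\ x) -> chi1 le S.
Proof.
move=> ob [xS [m [mS mx lmx hm]]] h a Ha.
have [r t an] := ob.
have [a' Ha'] := sol_exists (S :\ x) (fun=> 1) ob.
pose a'' y := if y == x then 0 else a' y.
have Ha'' : downsol le S (fun=> 1) a''.
  move=> z zS; rewrite /a'' sum_D1; case: (z =P x) => [->|/eqP zx].
    have mS' : m \in S :\ x by rewrite !inE mx.
    rewrite -(Ha' m mS'); apply: eq_bigl => y; rewrite !inE.
    case: (y =P x) => //= /eqP yx; case yS: (y \in S) => //=.
    apply/idP/idP; first exact: hm.
    by move=> h1; exact: t h1 lmx.
  by apply: Ha'; rewrite !inE zx.
rewrite (eq_bigr a'') => [|y yS]; last exact: sol_uniq Ha Ha'' y yS.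
rewrite -(h a' Ha') (big_setD1 x xS) /= /a'' eqxx add0r.
by apply: eq_bigr => y; rewrite !inE => /andP[/negbTE ->].
Qed.

Definition goodm (le : rel T) (S : {set T}) (f : T -> T) :=
  (forall x, x \in S -> f x \in S) /\
  (forall x y, x \in S -> y \in S -> le x y -> le (f x) (f y)).
Definition cmpm (le : rel T) (S : {set T}) (f g : T -> T) :=
  (forall x, x \in S -> le (f x) (g x)) \/ (forall x, x \in S -> le (g x) (f x)).
Inductive reach (le : rel T) (S : {set T}) : (T -> T) -> Prop :=
| reach0 f : (forall x, x \in S -> f x = x) -> reach le S f
| reachS f g : reach le S f -> goodm le S g -> cmpm le S f g -> reach le S g.
Definition contr (le : rel T) (S : {set T}) := exists f c,
  [/\ reach le S f, c \in S & forall x, x \in S -> f x = c].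

Lemma reach_good (le : rel T) S f : reach le S f -> goodm le S f.
Proof.
elim=> [g hg|g h _ _ hh _] //; split=> [x xS|x y xS yS]; rewrite ?hg //.
Qed.

Lemma reach_dual (le : rel T) S f : reach le S f -> reach (dualr le) S f.
Proof.
elim=> [g hg|g h _ IH [h1 h2] hc]; first exact: reach0.
apply: reachS IH _ _; first by split=> // x y xS yS; exact: h2.
by rewrite /cmpm /dualr; case: hc; [right|left].
Qed.

Lemma contr_dual (le : rel T) S : contr le S -> contr (dualr le) S.
Proof. by case=> f [c [hf cS hc]]; exists f, c; split=> //; exact: reach_dual. Qed.

Lemma rigid (le : rel T) S f : orderb le -> (forall x, ~ downbeat le S x) ->
  goodm le S f -> (forall x, x \in S -> le (f x) x) -> forall x, x \in S -> f x = x.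
Proof.
move=> ob nb [fS fm] hf x xS; apply/eqP/negPn/negP => fx.
have D0 : [set y in S | f y != y] != set0 by apply/set0Pn; exists x; rewrite !inE xS.
have [y] := ex_min ob D0; rewrite !inE => /andP[yS fy] ymin.
apply: (nb y); split=> //; exists (f y); split => //; first exact: fS; first exact: hf.
move=> z zS zy lzy; have fz : f z = z.
  apply/eqP/negPn/negP => fz; move: zy; by rewrite (ymin z) ?eqxx // !inE zS.
by rewrite -fz; apply: fm.
Qed.

Lemma rigid_reach (le : rel T) S f : orderb le -> (forall x, ~ downbeat le S x) ->
  (forall x, ~ downbeat (dualr le) S x) -> reach le S f ->
  forall x, x \in S -> f x = x.
Proof.
move=> ob nb nb'; elim=> [g hg //|g h _ IH hh [hc|hc]] x xS.
- apply: (@rigid (dualr le)) => //; first exact: orderb_dual.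
  + by case: hh => h1 h2; split=> // u v uS vS; exact: h2.
  + by move=> u uS; rewrite /dualr -{1}(IH u uS); exact: hc.
- apply: (@rigid le) => // u uS; rewrite -{2}(IH u uS); exact: hc.
Qed.

Lemma contr_remove (le : rel T) (S : {set T}) x : orderb le -> downbeat le S x ->
  contr le S -> contr le (S :\ x).
Proof.
move=> [r t an] [xS [m [mS mx lmx hm]]] [f [c [hf cS hc]]].
pose rr y := if y == x then m else y.
have rS y : y \in S -> rr y \in S :\ x.
  by rewrite /rr; case: (y =P x) => [_|/eqP yx yS]; rewrite !inE ?mx ?yx.
have rmono y z : y \in S -> z \in S -> le y z -> le (rr y) (rr z).
  rewrite /rr => yS zS lyz; case: (y =P x) => [yx|/eqP yx]; case: (z =P x) => [zx|/eqP zx].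
  - exact: r.
  - by apply: (t _ _ _ lmx); rewrite -yx.
  - by apply: hm => //; rewrite -zx.
  - exact: lyz.
have sub y : y \in S :\ x -> y \in S by rewrite !inE => /andP[].
have key g : reach le S g -> reach le (S :\ x) (rr \o g).
  elim=> [g0 hg|g0 h hr IH [h1 h2] hcm].
    apply: reach0 => y yS'; rewrite /= hg ?sub // /rr.
    by move: yS'; rewrite !inE => /andP[/negbTE ->].
  have [f1 _] := reach_good hr.
  apply: reachS IH _ _.
    split=> [y yS|y z yS zS lyz] /=; first by apply: rS; apply: h1; apply: sub.
    by apply: rmono; [apply: h1; apply: sub..|apply: h2 => //; apply: sub].
  case: hcm => hcm; [left|right] => y yS /=;
    (apply: rmono; [apply: f1 + apply: h1; apply: sub ..|apply: hcm; apply: sub]); exact: yS.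
exists (rr \o f), (rr c); split; [exact: key|exact: rS|].
by move=> y yS /=; rewrite hc // sub.
Qed.

Lemma chi1_single (le : rel T) (S : {set T}) c : orderb le -> c \in S ->
  (forall x, x \in S -> x = c) -> chi1 le S.
Proof.
move=> [r _ _] cS hS.
have -> : S = [set c].
  by apply/setP => y; rewrite !inE; apply/idP/eqP => [/hS|->].
move=> a Ha; have := Ha c; rewrite !inE eqxx => /(_ isT).
by rewrite big_set1 (big_pred1 c) // => y; rewrite !inE andb_idr // => /eqP ->.
Qed.

Lemma main_comb (le : rel T) (S : {set T}) : orderb le -> contr le S -> chi1 le S.
Proof.
move=> ob; move: {2}#|S| (leqnn #|S|) => k; elim: k S => [|k IH] S.
  rewrite leqn0 cards_eq0 => /eqP -> [f [c [_ ]]]; by rewrite inE.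
move=> Sk hc.
have ok x : x \in S -> (#|S :\ x| <= k)%N.
  by move=> xS; rewrite -ltnS (leq_trans _ Sk) // (cardsD1 x S) xS.
case: (Classical_Prop.classic (exists x, downbeat le S x)) => [[x hx]|nb].
  apply: (chi1_downbeat ob hx); apply: IH; first exact: ok (proj1 hx).
  exact: contr_remove.
case: (Classical_Prop.classic (exists x, downbeat (dualr le) S x)) => [[x hx]|nb'].
  have ob' := orderb_dual ob.
  apply: (@chi1_dual (dualr le)) => //.
  apply: (chi1_downbeat ob' hx); apply: chi1_dual => //.
  apply: IH; first exact: ok (proj1 hx).
  exact: (contr_dual (contr_remove ob' hx (contr_dual hc))).
case: hc => f [c [hf cS hfc]].
apply: (chi1_single ob cS) => x xS.
rewrite -(hfc x xS) (rigid_reach ob _ _ hf xS) //.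
- by move=> y hy; apply: nb; exists y.
- by move=> y hy; apply: nb'; exists y.
Qed.
End Comb.

Lemma rank_from_chi (F : fieldType) n (le : rel 'I_n) : orderb le ->
  chi1 F le setT ->
  (n - \rank (\matrix_(i < n, j < n) (if le i j then 0%R else 1%R : F) : 'M[F]_n))%N = 1%N.
Proof.
move=> ob hchi.
set M := \matrix_(i < n, j < n) _.
have [a Ha] := sol_exists setT (fun=> 1 : F) ob.
have suma := hchi a Ha.
have Ha' j : \sum_(i | le i j) a i = 1.
  by rewrite -(Ha j (in_setT j)); apply: eq_bigl => i; rewrite in_setT.
pose v := \row_i a i.
have vM : v *m M = 0.
  apply/rowP => j; rewrite !mxE.
  transitivity (\sum_i a i - \sum_(i | le i j) a i); last first.
    have sumT : \sum_i a i = 1 by rewrite -suma; apply: eq_bigl => i; rewrite in_setT.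
    by rewrite Ha' sumT subrr.
  rewrite [X in _ = X - _](bigID (fun i => le i j)) /= addrC addrK.
  rewrite [LHS](bigID (fun i => le i j)) /= big1 ?add0r; last first.
    by move=> i lij; rewrite !mxE lij mulr0.
  by apply: eq_bigr => i /negbTE lij; rewrite !mxE lij mulr1.
have v0 : v != 0.
  apply/eqP => v0; move: suma; rewrite big1 => [/esym/eqP|i _].
    by rewrite oner_eq0.
  by have := congr1 (fun m : 'rV[F]_n => m 0 i) v0; rewrite !mxE.
have h1 : (1 <= n - \rank M)%N.
  have vk : (v <= kermx M)%MS by apply/sub_kermxP.
  rewrite -mxrank_ker; apply: (leq_trans _ (mxrankS vk)).
  by rewrite lt0n mxrank_eq0.
pose A := \matrix_(i < n, j < n) (if le i j then 1 else 0 : F).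
have rA : \rank A = n.
  apply/eqP; apply: inj_row_free => w wA.
  apply/rowP => i; rewrite mxE.
  apply: (@sol_zero _ _ le setT (fun i => w 0 i)) => // j _.
  transitivity ((w *m A) 0 j); last by rewrite wA mxE.
  rewrite !mxE big_mkcond /=; apply: eq_bigr => k _; rewrite in_setT /= /A !mxE.
  by case: (le k j); rewrite ?mulr1 ?mulr0.
have AJ : A = (const_mx 1 : 'cV[F]_n) *m (const_mx 1 : 'rV[F]_n) + - M.
  apply/matrixP => i j; rewrite !mxE big_ord1 !mxE mulr1.
  by case: (le i j); rewrite ?subr0 ?subrr.
have h2 : (n <= 1 + \rank M)%N.
  rewrite -{1}rA AJ; apply: leq_trans (mxrank_add _ _) _.
  by rewrite mxrank_opp leq_add2r mulmx_max_rank.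
have := rank_leq_row M; lia.
Qed.

From mathcomp Require Import all_classical all_reals all_analysis.
Import Order.TTheory GRing.Theory Num.Theory.
Section Topo.
Local Open Scope classical_set_scope.
Variable X : topologicalType.

Lemma finle_in (a b : X) : fin_le a b <-> minimal_open b a.
Proof.
rewrite /fin_le /minimal_open; split.
  by move=> h; apply: h => U [].
move=> hab z hz V [oV Vb]; apply: hz; split => //; exact: hab.
Qed.

Lemma finle_open (a b : X) : fin_le a b <-> (forall V, open V -> V b -> V a).
Proof.
rewrite finle_in /minimal_open; split.
  by move=> h V oV Vb; apply: h.
by move=> h V [oV Vb]; apply: h.
Qed.

Lemma minopen_nbhs n (lab : 'I_n -> X) : (forall x, exists i, lab i = x) ->
  forall x : X, nbhs x (minimal_open x).
Proof.
move=> sur x.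
have H1 i : \forall z \near x, (~ minimal_open x (lab i) -> z <> lab i).
  case: (Classical_Prop.classic (minimal_open x (lab i))) => hi.
    by apply: filterE => z; move/(_ hi).
  have [U hU] : exists U, ~ ((open U /\ U x) -> U (lab i)).
    by apply/existsNP => hh; apply: hi => U hU'; exact: hh.
  have [oU Ux] : open U /\ U x.
    by apply: Classical_Prop.NNPP => hn; apply: hU => hh; case: (hn hh).
  have nUi : ~ U (lab i) by move=> hh; apply: hU.
  apply: (filterS _ (open_nbhs_nbhs (conj oU Ux))) => z Uz _ zi.
  by apply: nUi; rewrite -zi.
have := filter_forall (nbhs_filter x) H1; apply: filterS => z hz.
have [i iz] := sur z; rewrite -iz.
by apply: Classical_Prop.NNPP => hn; exact: (hz i hn (esym iz)).
Qed.
End Topo.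

Import numFieldNormedType.Exports.
Section Homot.
Local Open Scope classical_set_scope.
Variables (R : realType) (X : topologicalType) (H : X * R -> X).
Hypothesis hH : {within [set p : X * R | 0 <= p.2 <= 1], continuous H}.

Lemma Hloc x t0 W : 0 <= t0 <= 1 -> nbhs (H (x,t0)) W ->
  exists A B, [/\ nbhs x A, nbhs t0 B &
    forall y s, A y -> B s -> 0 <= s <= 1 -> W (H (y,s))].
Proof.
move=> ht0 nW.
have := (@subspace_continuousP _ [set p : X * R | 0 <= p.2 <= 1] _ H).1 hH (x,t0) ht0 W nW.
rewrite nbhs_simpl /= => -[[A B] /= [nA nB] sub].
exists A, B; split=> // y s Ay Bs hs.
exact: (sub (y,s) (conj Ay Bs) hs).
Qed.

Lemma Hmono t a b : 0 <= t <= 1 -> fin_le a b -> fin_le (H (a,t)) (H (b,t)).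
Proof.
move=> ht hab; apply/finle_open => V oV Vb.
have [A [B [nA nB hAB]]] := Hloc (x:=b) ht (open_nbhs_nbhs (conj oV Vb)).
move: nA; rewrite nbhsE; case=> O [oO Ob] OA.
apply: hAB => //; last exact: nbhs_singleton nB.
by apply: OA; exact: (proj1 (finle_open a b) hab O oO Ob).
Qed.

Lemma Hlocal n (lab : 'I_n -> X) : (forall x, exists i, lab i = x) ->
  forall t0, 0 <= t0 <= 1 -> exists O : set R, [/\ open O, O t0 &
    forall s, O s -> 0 <= s <= 1 -> forall i, fin_le (H (lab i, s)) (H (lab i, t0))].
Proof.
move=> sur t0 ht0.
have h1 i : \forall s \near t0, 0 <= s <= 1 -> fin_le (H (lab i, s)) (H (lab i, t0)).
  have [A [B [nA nB hAB]]] := Hloc (x:=lab i) ht0 (minopen_nbhs sur (H (lab i, t0))).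
  apply: filterS nB => s Bs hs; apply/finle_in; apply: hAB => //.
  exact: nbhs_singleton nA.
have := filter_forall (nbhs_filter t0) h1; rewrite nbhsE; case=> O [oO Ot0] sub.
by exists O; split => // s Os hs i; exact: sub s Os i hs.
Qed.
End Homot.

Theorem mainTheorem11 (R : realType) (X : topologicalType) (n : nat)
  (lab : 'I_n -> X) (lab_bij : bijective lab)
  (hT0 : kolmogorov_space X) (hcontr : contractible R X) (hn : (1 < n)%N) :
  (n - \rank (XM R lab))%N = 1%N.
Proof.
have [g lg gl] := lab_bij.
pose le : rel 'I_n := fun i j => `[< fin_le (lab i) (lab j) >].
have sur x : exists i, lab i = x by exists (g x); exact: gl.
have anti (a b : X) : fin_le a b -> fin_le b a -> a = b.
  move=> h1 h2; apply: Classical_Prop.NNPP => /eqP neq.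
  have [A [[nA nb]|[nA na]]] := hT0 _ _ neq.
  - move: nA nb; rewrite !in_setE /= nbhsE; case=> Q [oQ Qa] QA; apply.
    by apply: QA; exact: (proj1 (finle_open b a) h2 Q oQ Qa).
  - move: nA na; rewrite !in_setE /= nbhsE; case=> Q [oQ Qb] QA; apply.
    by apply: QA; exact: (proj1 (finle_open a b) h1 Q oQ Qb).
have ob : orderb le.
  split.
  - by move=> i; apply/asboolP => z.
  - move=> j i k /asboolP h1 /asboolP h2; apply/asboolP; exact: subset_trans h1 h2.
  - move=> i j /asboolP h1 /asboolP h2; apply: (can_inj lg); exact: anti.
have hcontr' : contr le [set: 'I_n]%SET.
  case: hcontr => x0 [Hf [hHc [h0 h1]]].
  pose ft (t : R) := fun i => g (Hf (lab i, t)).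
  pose G := [set t : R | 0 <= t <= 1 /\ reach le [set: 'I_n]%SET (ft t)]%classic.
  have ftle t s i : fin_le (Hf (lab i, t)) (Hf (lab i, s)) -> le (ft t i) (ft s i).
    by move=> h; apply/asboolP; rewrite /ft !gl.
  have goodt t : 0 <= t <= 1 -> goodm le [set: 'I_n]%SET (ft t).
    move=> ht; split => // i j _ _ /asboolP hij; apply/asboolP; rewrite /ft !gl.
    exact: Hmono.
  have loc := Hlocal hHc sur.
  have conn : connected [set t : R | 0 <= t <= 1]%classic.
    apply/connected_intervalP => x y /andP[x0' _] /andP[_ y1] z /andP[xz zy].
    by apply/andP; split; [exact: le_trans x0' xz | exact: le_trans zy y1].
  have GE : G = [set t : R | 0 <= t <= 1]%classic.
    apply: conn.
    - exists 0; split; first by rewrite lexx ler01.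
      by apply: reach0 => i _; rewrite /ft h0 lg.
    - pose C := [set t | exists t0 Q, [/\ G t0, open Q, Q t0, Q t &
         forall s, Q s -> 0 <= s <= 1 -> forall i, fin_le (Hf (lab i, s)) (Hf (lab i, t0))]]%classic.
      exists C.
        rewrite openE => t [t0 [Q [Gt0 oQ Qt0 Qt hO]]]; rewrite /interior.
        by apply: filterS (open_nbhs_nbhs (conj oQ Qt)) => s Qs; exists t0, Q.
      apply/seteqP; split.
        move=> t [ht rt]; split => //; have [Q [oQ Qt hO]] := loc t ht.
        by exists t, Q; split.
      move=> t [ht [t0 [Q [[ht0 rt0] oQ Qt0 Qt hO]]]]; split => //.
      apply: reachS rt0 (goodt t ht) _; right => i _; exact: ftle (hO t Qt ht i).
    - pose D := [set t | exists t0 Q, [/\ 0 <= t0 <= 1 /\ ~ reach le [set: 'I_n]%SET (ft t0), open Q, Q t0, Q t &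
         forall s, Q s -> 0 <= s <= 1 -> forall i, fin_le (Hf (lab i, s)) (Hf (lab i, t0))]]%classic.
      exists (~` D)%classic.
        apply: open_closedC; rewrite openE => t [t0 [Q [[ht0 nr] oQ Qt0 Qt hO]]].
        by apply: filterS (open_nbhs_nbhs (conj oQ Qt)) => s Qs; exists t0, Q.
      apply/seteqP; split.
        move=> t [ht rt]; split => // -[t0 [Q [[ht0 nr] oQ Qt0 Qt hO]]]; apply: nr.
        apply: reachS rt (goodt t0 ht0) _; left => i _; exact: ftle (hO t Qt ht i).
      move=> t [ht nD]; split => //; apply: Classical_Prop.NNPP => nr; apply: nD.
      have [Q [oQ Qt hO]] := loc t ht; by exists t, Q; split.
  have : G 1 by rewrite GE /= ler01 lexx.
  case=> _ r1; exists (ft 1), (g x0); split => // i _; by rewrite /ft h1.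
have hchi := main_comb ob hcontr'.
exact: (rank_from_chi ob (hchi R)).
Qed.
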